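(* For any constant $\gamma>0$, the map $\mathrm{Prox}_p:\mathbb{R}^n\to\mathbb{R}^n$ is $\gamma$-order semismooth on $\mathbb{R}^n$ with respect to the multifunction $\mathcal M$; that is, $\mathrm{Prox}_p$ is directionally differentiable everywhere, and for every $x\in\mathbb{R}^n$, $\mathrm{Prox}_p(x+\Delta x)-\mathrm{Prox}_p(x)-V\Delta x=O(\|\Delta x\|^{1+\gamma})$ as $\Delta x\to0$, uniformly over $V\in\mathcal M(x+\Delta x)$.
   Context: $\beta,\rho>0$; $p(x):=\beta\|x\|_1+\rho\sum_{1\le i<j\le n}|x_i-x_j|$; $\mathrm{Prox}_p(y):=\operatorname{argmin}_x\{\tfrac12\|x-y\|^2+p(x)\}$. $S_\rho(y):=\operatorname{argmin}_x\{\tfrac12\|x-y\|^2+\rho\sum_{i<j}|x_i-x_j|\}$. $w_k=n-2k+1$. $\mathcal D:=\{x: x_1\ge\cdots\ge x_n\}$, $\Pi_{\mathcal D}$ the Euclidean projection. $B\in\mathbb{R}^{(n-1)\times n}$ with $Bx=(x_1-x_2,\dots,x_{n-1}-x_n)^T$. For each $y$, $P_y$ is a fixed permutation matrix with $P_yy$ non-increasing. For $v\in\mathbb{R}^n$: $\mathcal M_{\mathcal D}(v)$ is the set of $\lambda\in\mathbb{R}^{n-1}$ with $\Pi_{\mathcal D}(v)-v+B^T\lambda=0$, $B\Pi_{\mathcal D}(v)\ge0$, $\lambda\le0$, $\lambda^TB\Pi_{\mathcal D}(v)=0$; $\mathcal I_{\mathcal D}(v):=\{i: B_i\Pi_{\mathcal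 D}(v)=0\}$; $\mathcal K_{\mathcal D}(v):=\{K:\exists\lambda\in\mathcal M_{\mathcal D}(v),\ \mathrm{supp}(\lambda)\subseteq K\subseteq\mathcal I_{\mathcal D}(v),\ B_K\text{ full row rank}\}$; $\mathcal Q_{\mathcal D}(v):=\{I_n-B_K^T(B_KB_K^T)^{-1}B_K:K\in\mathcal K_{\mathcal D}(v)\}$; $\mathcal Q_{S_\rho}(y):=\{P_y^T\widehat QP_y:\widehat Q\in\mathcal Q_{\mathcal D}(P_yy-\rho w)\}$. $\partial_B\mathrm{Prox}_{\beta\|\cdot\|_1}(\eta)$ is the set of $\mathrm{Diag}(q)$ with $q_i=0$ if $|\eta_i|<\beta$, $q_i\in\{0,1\}$ if $|\eta_i|=\beta$, $q_i=1$ otherwise. $\mathcal M(y):=\{M \text{ symmetric}: M=\Theta Q,\ \Theta\in\partial_B\mathrm{Prox}_{\beta\|\cdot\|_1}(S_\rho(y)),\ Q\in\mathcal Q_{S_\rho}(y)\}$. *)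

(* Defs.v *)
(* Stdlib (classical reals R).  Vectors of R^m are represented as
   functions nat -> R of which only the entries 0..m-1 are meaningful;
   matrices as nat -> nat -> R.  All indices are 0-based. *)
From Stdlib Require Import Reals Lra List Arith.
Open Scope R_scope.

Definition vec := nat -> R.
Definition mat := nat -> nat -> R.

Fixpoint rsum (m : nat) (f : nat -> R) : R :=
  match m with
  | O => 0
  | S k => rsum k f + f k
  end.

Definition vadd (x y : vec) : vec := fun i => x i + y i.
Definition vsub (x y : vec) : vec := fun i => x i - y i.
Definition vscal (t : R) (x : vec) : vec := fun i => t * x i.

Definition norm2 (m : nat) (x : vec) : R := sqrt (rsum m (fun i => (x i) ^ 2)).
Definition sqnorm (m : nat) (x : vec) : R := rsum m (fun i => (x i) ^ 2).

Definition mvmul (k : nat) (A : mat) (x : vec) : vec :=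
  fun i => rsum k (fun j => A i j * x j).
Definition mmul (k : nat) (A B : mat) : mat :=
  fun i j => rsum k (fun l => A i l * B l j).
Definition mtr (A : mat) : mat := fun i j => A j i.
Definition idm : mat := fun i j => if Nat.eqb i j then 1 else 0.
Definition msub (A B : mat) : mat := fun i j => A i j - B i j.
Definition diagm (q : vec) : mat := fun i j => if Nat.eqb i j then q i else 0.

Definition meq (r c : nat) (A B : mat) : Prop :=
  forall i j, (i < r)%nat -> (j < c)%nat -> A i j = B i j.

Definition l1norm (n : nat) (x : vec) : R := rsum n (fun i => Rabs (x i)).
Definition pairsum (n : nat) (x : vec) : R :=
  rsum n (fun j => rsum j (fun i => Rabs (x i - x j))).
Definition pen (n : nat) (beta rho : R) (x : vec) : R :=
  beta * l1norm n x + rho * pairsum n x.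

Definition is_argmin_on (n : nat) (C : vec -> Prop) (f : vec -> R) (y x : vec) : Prop :=
  C x /\ forall z, C z ->
    / 2 * sqnorm n (vsub x y) + f x <= / 2 * sqnorm n (vsub z y) + f z.

Definition is_prox_map (n : nat) (f : vec -> R) (prox : vec -> vec) : Prop :=
  forall y, is_argmin_on n (fun _ => True) f y (prox y).

Definition inD (n : nat) (x : vec) : Prop :=
  forall i, (S i < n)%nat -> x (S i) <= x i.
Definition is_proj_D (n : nat) (proj : vec -> vec) : Prop :=
  forall v, is_argmin_on n (inD n) (fun _ => 0) v (proj v).

(* B in R^{(n-1) x n}, (Bx)_i = x_i - x_{i+1} *)
Definition Bm : mat := fun i j =>
  if Nat.eqb j i then 1 else if Nat.eqb j (S i) then -1 else 0.

(* w_k = n - 2k + 1 (1-based k), i.e. n - 2k - 1 for 0-based k *)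
Definition wvec (n : nat) : vec := fun k => INR n - 2 * INR k - 1.

Definition is_perm (n : nat) (sigma : nat -> nat) : Prop :=
  (forall i, (i < n)%nat -> (sigma i < n)%nat) /\
  (forall i j, (i < n)%nat -> (j < n)%nat -> sigma i = sigma j -> i = j).
Definition permm (sigma : nat -> nat) : mat :=
  fun i j => if Nat.eqb j (sigma i) then 1 else 0.
Definition is_sort_perm_sel (n : nat) (Psel : vec -> nat -> nat) : Prop :=
  forall y, is_perm n (Psel y) /\ inD n (mvmul n (permm (Psel y)) y).

Definition M_D (n : nat) (proj : vec -> vec) (v : vec) (lam : vec) : Prop :=
  let pv := proj v in
  (forall j, (j < n)%nat ->
     pv j - v j + mvmul (n - 1) (mtr Bm) lam j = 0) /\
  (forall i, (i < n - 1)%nat -> mvmul n Bm pv i >= 0) /\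
  (forall i, (i < n - 1)%nat -> lam i <= 0) /\
  rsum (n - 1) (fun i => lam i * mvmul n Bm pv i) = 0.

Definition I_D (n : nat) (proj : vec -> vec) (v : vec) (i : nat) : Prop :=
  (i < n - 1)%nat /\ mvmul n Bm (proj v) i = 0.

Definition BK (K : list nat) : mat := fun r j => Bm (nth r K O) j.

Definition full_row_rank (m n : nat) (A : mat) : Prop :=
  forall c : vec,
    (forall j, (j < n)%nat -> rsum m (fun r => c r * A r j) = 0) ->
    forall r, (r < m)%nat -> c r = 0.

Definition K_D (n : nat) (proj : vec -> vec) (v : vec) (K : list nat) : Prop :=
  NoDup K /\
  (exists lam, M_D n proj v lam /\
     forall i, (i < n - 1)%nat -> lam i <> 0 -> In i K) /\
  (forall i, In i K -> I_D n proj v i) /\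
  full_row_rank (length K) n (BK K).

Definition is_inverse (m : nat) (A W : mat) : Prop :=
  meq m m (mmul m W A) idm /\ meq m m (mmul m A W) idm.

Definition Q_D (n : nat) (proj : vec -> vec) (v : vec) (Q : mat) : Prop :=
  exists K, K_D n proj v K /\
    exists W, is_inverse (length K) (mmul n (BK K) (mtr (BK K))) W /\
      meq n n Q
        (msub idm (mmul (length K) (mtr (BK K)) (mmul (length K) W (BK K)))).

Definition Q_S (n : nat) (rho : R) (proj : vec -> vec) (Psel : vec -> nat -> nat)
    (y : vec) (Q : mat) : Prop :=
  let P := permm (Psel y) in
  exists Qh, Q_D n proj (vsub (mvmul n P y) (vscal rho (wvec n))) Qh /\
    meq n n Q (mmul n (mtr P) (mmul n Qh P)).

Definition dB_prox_l1 (n : nat) (beta : R) (eta : vec) (Theta : mat) : Prop :=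
  exists q : vec,
    (forall i, (i < n)%nat ->
       (Rabs (eta i) < beta -> q i = 0) /\
       (Rabs (eta i) = beta -> q i = 0 \/ q i = 1) /\
       (Rabs (eta i) > beta -> q i = 1)) /\
    meq n n Theta (diagm q).

Definition Mset (n : nat) (beta rho : R) (Srho : vec -> vec) (proj : vec -> vec)
    (Psel : vec -> nat -> nat) (y : vec) (M : mat) : Prop :=
  (forall i j, (i < n)%nat -> (j < n)%nat -> M i j = M j i) /\
  exists Theta Q,
    dB_prox_l1 n beta (Srho y) Theta /\
    Q_S n rho proj Psel y Q /\
    meq n n M (mmul n Theta Q).

Definition dir_diff_at (n : nat) (F : vec -> vec) (x d : vec) : Prop :=
  exists L : vec, forall eps, eps > 0 -> exists delta, delta > 0 /\
    forall t, 0 < t < delta ->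
      norm2 n (vsub (vscal (/ t) (vsub (F (vadd x (vscal t d))) (F x))) L) < eps.

(* Main.v *)
Require Import Defs.
From Stdlib Require Import Reals Lra Lia List Arith Permutation.
Open Scope R_scope.

Lemma rsum_ext m f g : (forall i, (i < m)%nat -> f i = g i) -> rsum m f = rsum m g.
Proof. induction m; simpl; intros H; auto. rewrite IHm by (intros; apply H; lia). rewrite H by lia. auto. Qed.

Lemma rsum_plus m f g : rsum m (fun i => f i + g i) = rsum m f + rsum m g.
Proof. induction m; simpl; [lra|rewrite IHm; lra]. Qed.
Lemma rsum_minus m f g : rsum m (fun i => f i - g i) = rsum m f - rsum m g.
Proof. induction m; simpl; [lra|rewrite IHm; lra]. Qed.
Lemma rsum_scal m c f : rsum m (fun i => c * f i) = c * rsum m f.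
Proof. induction m; simpl; [lra|rewrite IHm; lra]. Qed.
Lemma rsum_zero m f : (forall i, (i < m)%nat -> f i = 0) -> rsum m f = 0.
Proof. intros H. rewrite (rsum_ext m f (fun _ => 0)) by auto. induction m; simpl; auto. rewrite IHm; [lra|intros; auto]. Qed.
Lemma rsum_le m f g : (forall i, (i < m)%nat -> f i <= g i) -> rsum m f <= rsum m g.
Proof. induction m; simpl; intros H; [lra|]. assert (rsum m f <= rsum m g) by (apply IHm; intros; apply H; lia). specialize (H m ltac:(lia)). lra. Qed.
Lemma rsum_nonneg m f : (forall i, (i < m)%nat -> 0 <= f i) -> 0 <= rsum m f.
Proof. intros H. replace 0 with (rsum m (fun _ => 0)). apply rsum_le; auto. apply rsum_zero; auto. Qed.
Lemma rsum_exchange a b (f : nat -> nat -> R) :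
  rsum a (fun i => rsum b (fun j => f i j)) = rsum b (fun j => rsum a (fun i => f i j)).
Proof. induction a; simpl. symmetry; apply rsum_zero; auto. rewrite IHa. rewrite <- rsum_plus. auto. Qed.
Lemma rsum_const m c : rsum m (fun _ => c) = INR m * c.
Proof. induction m; simpl rsum. simpl; lra. rewrite IHm, S_INR; lra. Qed.
Lemma rsum_single m k f : (k < m)%nat -> (forall i, (i < m)%nat -> i <> k -> f i = 0) -> rsum m f = f k.
Proof. induction m; intros Hk H; simpl. lia. destruct (Nat.eq_dec k m). subst. rewrite rsum_zero. lra. intros; apply H; lia. rewrite IHm by (try lia; intros; apply H; lia). rewrite (H m) by lia. lra. Qed.
Lemma rsum_abs m f : Rabs (rsum m f) <= rsum m (fun i => Rabs (f i)).
Proof. induction m; simpl. rewrite Rabs_R0; lra. eapply Rle_trans. apply Rabs_triang. lra. Qed.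
Lemma rsum_split_last m f : rsum (S m) f = rsum m f + f m.
Proof. reflexivity. Qed.
Lemma rsum_le_sub m k f : (k <= m)%nat -> (forall i, (i < m)%nat -> 0 <= f i) -> rsum k f <= rsum m f.
Proof. induction m; intros Hk H. replace k with 0%nat by lia; simpl; lra.
 destruct (Nat.eq_dec k (S m)). subst; lra. simpl. assert (rsum k f <= rsum m f) by (apply IHm; [lia| intros; apply H; lia]). specialize (H m ltac:(lia)); lra. Qed.

Definition veq (n : nat) (a b : vec) : Prop := forall i, (i < n)%nat -> a i = b i.
Definition ip (n : nat) (a b : vec) : R := rsum n (fun i => a i * b i).

Lemma sqnorm_ext n a b : veq n a b -> sqnorm n a = sqnorm n b.
Proof. intros H; unfold sqnorm; apply rsum_ext; intros; rewrite H; auto. Qed.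
Lemma sqnorm_nonneg n a : 0 <= sqnorm n a.
Proof. apply rsum_nonneg; intros; apply pow2_ge_0. Qed.
Lemma sqnorm_zero n a : sqnorm n a <= 0 -> veq n a (fun _ => 0).
Proof. unfold sqnorm. induction n; intros H i Hi. lia. change (rsum n (fun i => a i ^ 2) + a n ^ 2 <= 0) in H.
 pose proof (sqnorm_nonneg n a). unfold sqnorm in H0. pose proof (pow2_ge_0 (a n)).
 destruct (Nat.eq_dec i n). subst. assert ((a n)^2 = 0) by lra. nra. apply IHn; [lra|lia]. Qed.
Lemma coord_le_sqnorm n a i : (i < n)%nat -> (a i)^2 <= sqnorm n a.
Proof. intros Hi. unfold sqnorm.
 replace ((a i)^2) with (rsum n (fun j => if Nat.eq_dec j i then (a j)^2 else 0)).
 apply rsum_le. intros. destruct (Nat.eq_dec i0 i); [lra| apply pow2_ge_0].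
 rewrite (rsum_single n i); auto. destruct (Nat.eq_dec i i); [auto|congruence].
 intros; destruct (Nat.eq_dec i0 i); congruence. Qed.
Lemma norm2_sq n a : (norm2 n a)^2 = sqnorm n a.
Proof. unfold norm2. rewrite <- Rsqr_pow2. apply Rsqr_sqrt. apply sqnorm_nonneg. Qed.
Lemma norm2_nonneg n a : 0 <= norm2 n a.
Proof. apply sqrt_pos. Qed.
Lemma coord_le_norm2 n a i : (i < n)%nat -> Rabs (a i) <= norm2 n a.
Proof. intros Hi. rewrite <- sqrt_Rsqr_abs. unfold norm2. apply sqrt_le_1_alt.
 rewrite Rsqr_pow2. apply coord_le_sqnorm; auto. Qed.
Lemma norm2_ext n a b : veq n a b -> norm2 n a = norm2 n b.
Proof. intros; unfold norm2; f_equal; apply sqnorm_ext; auto. Qed.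
Lemma norm2_zero n a : veq n a (fun _ => 0) -> norm2 n a = 0.
Proof. intros H. unfold norm2, sqnorm. rewrite rsum_zero. apply sqrt_0. intros; rewrite H; auto; simpl; lra. Qed.
Lemma abs_le_between a b : Rabs a <= b -> -b <= a <= b.
Proof. unfold Rabs; destruct (Rcase_abs a); intros; lra. Qed.

Fixpoint lsum (l : list nat) (f : nat -> R) : R :=
  match l with nil => 0 | i :: l' => f i + lsum l' f end.

Lemma lsum_app l1 l2 f : lsum (l1 ++ l2) f = lsum l1 f + lsum l2 f.
Proof. induction l1; simpl; [lra|rewrite IHl1; lra]. Qed.
Lemma rsum_lsum m f : rsum m f = lsum (seq 0 m) f.
Proof. induction m; [simpl; auto|]. change (rsum (S m) f) with (rsum m f + f m). rewrite seq_S, lsum_app, IHm. simpl. lra. Qed.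
Lemma lsum_perm l1 l2 f : Permutation l1 l2 -> lsum l1 f = lsum l2 f.
Proof. induction 1; simpl; lra. Qed.
Lemma lsum_map l s f : lsum (map s l) f = lsum l (fun i => f (s i)).
Proof. induction l; simpl; auto. rewrite IHl; auto. Qed.
Lemma lsum_ext l f g : (forall i, In i l -> f i = g i) -> lsum l f = lsum l g.
Proof. induction l; simpl; intros; auto. rewrite H, IHl; auto. Qed.
Lemma lsum_zero l f : (forall i, In i l -> f i = 0) -> lsum l f = 0.
Proof. induction l; simpl; intros; auto. rewrite H, IHl; auto. lra. Qed.

Lemma NoDup_map_inj (s : nat -> nat) l : (forall i j, In i l -> In j l -> s i = s j -> i = j) -> NoDup l -> NoDup (map s l).
Proof. induction l; simpl; intros H Hn; constructor; inversion Hn; subst.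
 intros Hin. apply in_map_iff in Hin. destruct Hin as [k [E Hk]]. assert (k = a) by (apply H; auto). subst; tauto.
 apply IHl; auto. Qed.

Lemma perm_surj n s : is_perm n s -> forall j, (j < n)%nat -> exists i, (i < n)%nat /\ s i = j.
Proof. intros [Hr Hi] j Hj.
 assert (ND : NoDup (map s (seq 0 n))) by (apply NoDup_map_inj; [intros i k Hi1 Hk1 E; apply in_seq in Hi1; apply in_seq in Hk1; apply Hi; auto; lia| apply seq_NoDup]).
 assert (incl (seq 0 n) (map s (seq 0 n))).
 { apply NoDup_length_incl; auto. rewrite length_map; auto.
   intros x Hx. apply in_map_iff in Hx. destruct Hx as [k [E Hk]]. apply in_seq in Hk. apply in_seq. subst. specialize (Hr k). lia. }
 assert (In j (map s (seq 0 n))) by (apply H; apply in_seq; lia).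
 apply in_map_iff in H0. destruct H0 as [k [E Hk]]. apply in_seq in Hk. exists k; split; auto; lia. Qed.

Lemma rsum_perm n s f : is_perm n s -> rsum n (fun i => f (s i)) = rsum n f.
Proof. intros Hp. rewrite !rsum_lsum. rewrite <- lsum_map. apply lsum_perm.
 destruct Hp as [Hr Hi]. apply NoDup_Permutation.
 apply NoDup_map_inj; [intros i k Hi1 Hk1 E; apply in_seq in Hi1; apply in_seq in Hk1; apply Hi; auto; lia| apply seq_NoDup].
 apply seq_NoDup. intros x; split; intros Hx.
 apply in_map_iff in Hx. destruct Hx as [k [E Hk]]. apply in_seq in Hk. apply in_seq. subst. specialize (Hr k). lia.
 apply in_seq in Hx. destruct (perm_surj n s (conj Hr Hi) x) as [k [Hk E]]. lia. apply in_map_iff. exists k; split; auto. apply in_seq; lia. Qed.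

Fixpoint sfind (s : nat -> nat) (j : nat) (m : nat) : nat :=
  match m with O => O | S k => if Nat.eqb (s k) j then k else sfind s j k end.
Definition sinv (n : nat) (s : nat -> nat) (j : nat) : nat := sfind s j n.

Lemma sfind_spec s j m : (exists i, (i < m)%nat /\ s i = j) -> (sfind s j m < m)%nat /\ s (sfind s j m) = j.
Proof. induction m; simpl; intros [i [Hi E]]. lia. destruct (Nat.eqb_spec (s m) j). split; auto.
 destruct IHm as [A B]. exists i. split; auto. destruct (Nat.eq_dec i m); subst; [congruence|lia]. split; auto; lia. Qed.

Lemma sinv_spec n s j : is_perm n s -> (j < n)%nat -> (sinv n s j < n)%nat /\ s (sinv n s j) = j.
Proof. intros Hp Hj. apply sfind_spec. apply perm_surj; auto. Qed.
Lemma sinv_left n s i : is_perm n s -> (i < n)%nat -> sinv n s (s i) = i.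
Proof. intros Hp Hi. pose proof (sinv_spec n s (s i) Hp (proj1 Hp i Hi)). destruct H. apply (proj2 Hp); auto. Qed.
Lemma sinv_perm n s : is_perm n s -> is_perm n (sinv n s).
Proof. intros Hp. split. intros; apply sinv_spec; auto. intros i j Hi Hj E.
 destruct (sinv_spec n s i Hp Hi), (sinv_spec n s j Hp Hj). congruence. Qed.

Definition vcomp (x : vec) (s : nat -> nat) : vec := fun i => x (s i).

Lemma permm_mv n s x : (forall i, (i < n)%nat -> (s i < n)%nat) -> veq n (mvmul n (permm s) x) (vcomp x s).
Proof. intros Hr i Hi. unfold mvmul, permm, vcomp. rewrite (rsum_single n (s i)); auto.
 rewrite Nat.eqb_refl; lra. intros k Hk Hne. destruct (Nat.eqb_spec k (s i)); [congruence|lra]. Qed.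

Lemma permmT_mv n s x : is_perm n s -> veq n (mvmul n (mtr (permm s)) x) (vcomp x (sinv n s)).
Proof. intros Hp i Hi. unfold mvmul, permm, mtr, vcomp. destruct (sinv_spec n s i Hp Hi) as [A B].
 rewrite (rsum_single n (sinv n s i)); auto. rewrite B, Nat.eqb_refl; lra.
 intros k Hk Hne. destruct (Nat.eqb_spec i (s k)); [|lra]. subst. rewrite sinv_left in Hne; auto. congruence. Qed.

Lemma sqnorm_perm n s x : is_perm n s -> sqnorm n (vcomp x s) = sqnorm n x.
Proof. intros; unfold sqnorm, vcomp. apply (rsum_perm n s (fun i => x i ^ 2)); auto. Qed.
Lemma norm2_perm n s x : is_perm n s -> norm2 n (vcomp x s) = norm2 n x.
Proof. intros; unfold norm2; f_equal; apply sqnorm_perm; auto. Qed.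

Definition lin (a b : vec) (t : R) : vec := fun i => a i + t * (b i - a i).
Definition convex_set (C : vec -> Prop) := forall a b t, C a -> C b -> 0 <= t <= 1 -> C (lin a b t).
Definition convex_fun (C : vec -> Prop) (f : vec -> R) :=
  forall a b t, C a -> C b -> 0 <= t <= 1 -> f (lin a b t) <= (1 - t) * f a + t * f b.

Lemma sq_expand n (a b : vec) t :
  rsum n (fun i => (a i + t * b i)^2) = rsum n (fun i => (a i)^2) + 2 * t * rsum n (fun i => a i * b i) + t^2 * rsum n (fun i => (b i)^2).
Proof. rewrite (rsum_ext n _ (fun i => ((a i)^2 + (2*t) * (a i * b i)) + t^2 * (b i)^2)) by (intros; ring).
 rewrite !rsum_plus, !rsum_scal. ring. Qed.

Lemma lim_le a b c : (forall t, 0 < t <= 1 -> a <= b + t * c) -> a <= b.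
Proof. intros H. destruct (Rle_dec a b); auto. exfalso.
 assert (Hc: 0 <= Rabs c) by apply Rabs_pos.
 set (t := Rmin 1 ((a - b) / (2 * (Rabs c + 1)))).
 assert (0 < (a - b) / (2 * (Rabs c + 1))) by (apply Rdiv_lt_0_compat; lra).
 assert (0 < t <= 1) by (unfold t; split; [apply Rmin_pos; lra| apply Rmin_l]).
 specialize (H t H1). assert (t <= (a - b) / (2 * (Rabs c + 1))) by apply Rmin_r.
 assert (t * c <= t * Rabs c) by (apply Rmult_le_compat_l; [lra| apply RRle_abs]).
 assert (t * (Rabs c + 1) <= (a - b)/2).
 { replace ((a-b)/2) with (((a - b) / (2 * (Rabs c + 1))) * (Rabs c + 1)) by (field; lra).
   apply Rmult_le_compat_r; lra. }
 nra. Qed.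

Lemma argmin_ineq n C f y p z : convex_set C -> convex_fun C f ->
  is_argmin_on n C f y p -> C z ->
  0 <= ip n (vsub p y) (vsub z p) + f z - f p.
Proof. intros HC Hf [Hp Hmin] Hz.
 apply (lim_le _ _ (sqnorm n (vsub z p) / 2)). intros t Ht. assert (Ht' : 0 <= t <= 1) by lra.
 specialize (Hmin (lin p z t) (HC _ _ _ Hp Hz Ht')).
 pose proof (Hf p z t Hp Hz Ht').
 unfold sqnorm, vsub, lin, ip in *.
 rewrite (rsum_ext n (fun i => (p i + t * (z i - p i) - y i)^2) (fun i => ((p i - y i) + t * (z i - p i))^2)) in Hmin by (intros; ring).
 rewrite sq_expand in Hmin.
 assert (0 <= t * (rsum n (fun i => (p i - y i) * (z i - p i)) + f z - f p + t * (rsum n (fun i => (z i - p i)^2) / 2))) by nra.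
 apply Rmult_le_reg_l with t. lra. nra. Qed.

Lemma nonexp n C f y z p q : convex_set C -> convex_fun C f ->
  is_argmin_on n C f y p -> is_argmin_on n C f z q ->
  sqnorm n (vsub p q) <= sqnorm n (vsub y z).
Proof. intros HC Hf Hp Hq.
 pose proof (argmin_ineq n C f y p q HC Hf Hp (proj1 Hq)).
 pose proof (argmin_ineq n C f z q p HC Hf Hq (proj1 Hp)).
 unfold ip, sqnorm, vsub in *.
 assert (rsum n (fun i => (p i - y i) * (q i - p i)) + rsum n (fun i => (q i - z i) * (p i - q i)) =
   rsum n (fun i => (y i - z i) * (p i - q i)) - rsum n (fun i => (p i - q i)^2)).
 { rewrite <- rsum_plus, <- rsum_minus. apply rsum_ext; intros; ring. }
 assert (2 * rsum n (fun i => (y i - z i) * (p i - q i)) <= rsum n (fun i => (y i - z i)^2) + rsum n (fun i => (p i - q i)^2)).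
 { rewrite <- rsum_scal, <- rsum_plus. apply rsum_le. intros. pose proof (pow2_ge_0 ((y i - z i) - (p i - q i))). nra. }
 lra. Qed.

Lemma argmin_unique n C f y z p q : convex_set C -> convex_fun C f ->
  is_argmin_on n C f y p -> is_argmin_on n C f z q -> veq n y z -> veq n p q.
Proof. intros HC Hf Hp Hq E. pose proof (nonexp n C f y z p q HC Hf Hp Hq).
 assert (sqnorm n (vsub y z) = 0). { unfold sqnorm, vsub. apply rsum_zero. intros; rewrite E; auto. simpl; ring. }
 pose proof (sqnorm_zero n (vsub p q) ltac:(lra)). intros i Hi. specialize (H1 i Hi). unfold vsub in H1. lra. Qed.

Lemma nonexp_norm n C f y z p q : convex_set C -> convex_fun C f ->
  is_argmin_on n C f y p -> is_argmin_on n C f z q ->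
  norm2 n (vsub p q) <= norm2 n (vsub y z).
Proof. intros. unfold norm2. apply sqrt_le_1_alt. eapply nonexp; eauto. Qed.

Lemma convex_True : convex_set (fun _ => True).
Proof. intros a b t _ _ _; exact I. Qed.
Lemma convex_D n : convex_set (inD n).
Proof. intros a b t Ha Hb Ht i Hi. unfold lin. specialize (Ha i Hi). specialize (Hb i Hi). nra. Qed.
Lemma convex_zero C : convex_fun C (fun _ => 0).
Proof. intros a b t _ _ _. lra. Qed.
Lemma abs_conv a b t : 0 <= t <= 1 -> Rabs (a + t * (b - a)) <= (1 - t) * Rabs a + t * Rabs b.
Proof. intros Ht. replace (a + t*(b-a)) with ((1-t)*a + t*b) by ring.
 eapply Rle_trans. apply Rabs_triang. rewrite !Rabs_mult, (Rabs_pos_eq t), (Rabs_pos_eq (1-t)) by lra. lra. Qed.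
Lemma convex_pen n beta rho C : 0 <= beta -> 0 <= rho -> convex_fun C (pen n beta rho).
Proof. intros Hb Hr a b t _ _ Ht. unfold pen, l1norm, pairsum, lin.
 assert (rsum n (fun i => Rabs (a i + t * (b i - a i))) <= (1-t) * rsum n (fun i => Rabs (a i)) + t * rsum n (fun i => Rabs (b i))).
 { rewrite <- !rsum_scal, <- rsum_plus. apply rsum_le; intros; apply abs_conv; auto. }
 assert (rsum n (fun j => rsum j (fun i => Rabs (a i + t * (b i - a i) - (a j + t * (b j - a j))))) <=
   (1-t) * rsum n (fun j => rsum j (fun i => Rabs (a i - a j))) + t * rsum n (fun j => rsum j (fun i => Rabs (b i - b j)))).
 { rewrite <- !rsum_scal, <- rsum_plus. apply rsum_le; intros. rewrite <- !rsum_scal, <- rsum_plus. apply rsum_le; intros.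
   replace (a i0 + t * (b i0 - a i0) - (a i + t * (b i - a i))) with ((a i0 - a i) + t * ((b i0 - b i) - (a i0 - a i))) by ring.
   apply abs_conv; auto. }
 nra. Qed.

Definition full2 n (x : vec) := rsum n (fun j => rsum n (fun i => Rabs (x i - x j))).
Lemma full2_pairsum n x : full2 n x = 2 * pairsum n x.
Proof. unfold full2, pairsum. induction n. simpl; lra.
 change (rsum (S n) (fun j => rsum (S n) (fun i => Rabs (x i - x j)))) with
   (rsum n (fun j => rsum n (fun i => Rabs (x i - x j)) + Rabs (x n - x j)) + (rsum n (fun i => Rabs (x i - x n)) + Rabs (x n - x n))).
 change (rsum (S n) (fun j => rsum j (fun i => Rabs (x i - x j)))) with
   (rsum n (fun j => rsum j (fun i => Rabs (x i - x j))) + rsum n (fun i => Rabs (x i - x n))).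
 rewrite rsum_plus, IHn. rewrite (rsum_ext n (fun j => Rabs (x n - x j)) (fun i => Rabs (x i - x n))) by (intros; apply Rabs_minus_sym).
 replace (x n - x n) with 0 by ring. rewrite Rabs_R0. lra. Qed.

Lemma pairsum_perm n s x : is_perm n s -> pairsum n (vcomp x s) = pairsum n x.
Proof. intros Hp. assert (full2 n (vcomp x s) = full2 n x).
 { unfold full2, vcomp. rewrite (rsum_perm n s (fun j => rsum n (fun i => Rabs (x (s i) - x j)))) by auto.
   apply rsum_ext; intros j Hj. apply (rsum_perm n s (fun i => Rabs (x i - x j))); auto. }
 rewrite !full2_pairsum in H. lra. Qed.
Lemma l1norm_perm n s x : is_perm n s -> l1norm n (vcomp x s) = l1norm n x.
Proof. intros; unfold l1norm, vcomp. apply (rsum_perm n s (fun i => Rabs (x i))); auto. Qed.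
Lemma pen_perm n b r s x : is_perm n s -> pen n b r (vcomp x s) = pen n b r x.
Proof. intros; unfold pen; rewrite pairsum_perm, l1norm_perm; auto. Qed.
Lemma pen_ext n b r x y : veq n x y -> pen n b r x = pen n b r y.
Proof. intros H. unfold pen, l1norm, pairsum. f_equal. f_equal. apply rsum_ext; intros; rewrite H; auto.
 f_equal. apply rsum_ext; intros. apply rsum_ext; intros. rewrite !H by lia. auto. Qed.

Section Prox.
Variables (n : nat) (b r : R) (prox : vec -> vec).
Hypothesis Hb : 0 <= b.
Hypothesis Hr : 0 <= r.
Hypothesis Hprox : is_prox_map n (pen n b r) prox.

Lemma prox_unique y q : is_argmin_on n (fun _ => True) (pen n b r) y q -> veq n (prox y) q.
Proof. intros H. apply (argmin_unique n _ _ y y (prox y) q convex_True (convex_pen n b r _ Hb Hr) (Hprox y) H). intros i _; auto. Qed.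

Lemma prox_equiv s y : is_perm n s -> veq n (vcomp (prox y) s) (prox (vcomp y s)).
Proof. intros Hp. set (p := prox (vcomp y s)). set (q := vcomp p (sinv n s)).
 assert (Eq : veq n (vcomp q s) p). { intros i Hi. unfold q, vcomp. rewrite sinv_left; auto. }
 assert (Key : forall z, / 2 * sqnorm n (vsub z y) + pen n b r z = / 2 * sqnorm n (vsub (vcomp z s) (vcomp y s)) + pen n b r (vcomp z s)).
 { intros z. rewrite pen_perm by auto. f_equal. f_equal. rewrite <- (sqnorm_perm n s (vsub z y)) by auto. reflexivity. }
 assert (Hq : is_argmin_on n (fun _ => True) (pen n b r) y q).
 { split; auto. intros z _. rewrite !Key. rewrite (sqnorm_ext n (vsub (vcomp q s) (vcomp y s)) (vsub p (vcomp y s))) by (intros i Hi; unfold vsub; rewrite Eq; auto).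
   rewrite (pen_ext n b r (vcomp q s) p) by auto. apply (proj2 (Hprox (vcomp y s))). auto. }
 pose proof (prox_unique y q Hq). intros i Hi. unfold vcomp at 1. rewrite H by (apply Hp; auto). unfold q, vcomp. rewrite sinv_left; auto. Qed.

Lemma prox_ext y z : veq n y z -> veq n (prox y) (prox z).
Proof. intros E. apply (argmin_unique n _ _ y z _ _ convex_True (convex_pen n b r _ Hb Hr) (Hprox y) (Hprox z) E). Qed.
End Prox.

Definition swp (i j k : nat) : nat := if Nat.eqb k i then j else if Nat.eqb k j then i else k.
Lemma swp_perm n i j : (i < n)%nat -> (j < n)%nat -> is_perm n (swp i j).
Proof. intros Hi Hj. unfold swp; split.
 - intros k Hk. destruct (Nat.eqb_spec k i); [lia|]. destruct (Nat.eqb_spec k j); lia.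
 - intros k l Hk Hl. destruct (Nat.eqb_spec k i), (Nat.eqb_spec k j), (Nat.eqb_spec l i), (Nat.eqb_spec l j); lia. Qed.

Lemma rsum_two m a c h : (a < m)%nat -> (c < m)%nat -> a <> c -> (forall k, (k < m)%nat -> k <> a -> k <> c -> h k = 0) -> rsum m h = h a + h c.
Proof. intros Ha Hc Hac H.
 rewrite (rsum_ext m h (fun k => (if Nat.eq_dec k a then h k else 0) + (if Nat.eq_dec k a then 0 else h k))) by (intros; destruct (Nat.eq_dec i a); lra).
 rewrite rsum_plus. rewrite (rsum_single m a); [| auto | intros i Hi Hne; destruct (Nat.eq_dec i a); congruence].
 rewrite (rsum_single m c); [| auto | intros i Hi Hne; destruct (Nat.eq_dec i a); [lra| apply H; auto]].
 destruct (Nat.eq_dec a a); [|congruence]. destruct (Nat.eq_dec c a); [congruence|]. auto. Qed.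

Lemma prox_sorted n b r prox y : 0 <= b -> 0 <= r -> is_prox_map n (pen n b r) prox -> inD n y -> inD n (prox y).
Proof. intros Hb Hr Hprox Hy i Hi. destruct (Rle_dec (prox y (S i)) (prox y i)); auto. exfalso.
 set (p := prox y). set (p' := vcomp p (swp i (S i))).
 assert (Hs : is_perm n (swp i (S i))) by (apply swp_perm; lia).
 assert (Hd : sqnorm n (vsub p' y) - sqnorm n (vsub p y) = 2 * (p i - p (S i)) * (y i - y (S i))).
 { unfold sqnorm. rewrite <- rsum_minus. rewrite (rsum_two n i (S i)); try lia.
   unfold p', vcomp, vsub, swp. rewrite Nat.eqb_refl. destruct (Nat.eqb_spec (S i) i); [lia|]. rewrite Nat.eqb_refl. ring.
   intros k Hk H1 H2. unfold p', vcomp, vsub, swp. destruct (Nat.eqb_spec k i); [lia|]. destruct (Nat.eqb_spec k (S i)); [lia|]. ring. }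
 assert (Hyi := Hy i Hi).
 assert (Hmin : is_argmin_on n (fun _ => True) (pen n b r) y p').
 { split; auto. intros z _. unfold p'. rewrite pen_perm by auto. fold p'.
   pose proof (proj2 (Hprox y) z I). fold p in H.
   assert (2 * (p i - p (S i)) * (y i - y (S i)) <= 0). { assert (0 <= y i - y (S i)) by lra. assert (p i - p (S i) < 0) by (unfold p; lra). nra. }
   lra. }
 pose proof (prox_unique n b r prox Hb Hr Hprox y p' Hmin i ltac:(lia)). fold p in H.
 unfold p', vcomp, swp in H. rewrite Nat.eqb_refl in H. unfold p in *; lra. Qed.

Lemma Bu n u i : (S i < n)%nat -> mvmul n Bm u i = u i - u (S i).
Proof. intros H. unfold mvmul. rewrite (rsum_two n i (S i)); try lia.
 unfold Bm. rewrite Nat.eqb_refl. destruct (Nat.eqb_spec (S i) i); [lia|]. rewrite Nat.eqb_refl. ring.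
 intros k Hk H1 H2. unfold Bm. destruct (Nat.eqb_spec k i); [lia|]. destruct (Nat.eqb_spec k (S i)); [lia|]. ring. Qed.

Definition bt (m : nat) (lam : vec) (j : nat) : R :=
  (if Nat.ltb j m then lam j else 0) - (match j with O => 0 | S k => if Nat.ltb k m then lam k else 0 end).

Lemma BT_gen m lam j : rsum m (fun i => Bm i j * lam i) = bt m lam j.
Proof. induction m. unfold bt; simpl. destruct j; simpl; lra.
 change (rsum (S m) (fun i => Bm i j * lam i)) with (rsum m (fun i => Bm i j * lam i) + Bm m j * lam m).
 rewrite IHm. unfold bt, Bm. destruct j as [|j];
 repeat match goal with
 | |- context [Nat.ltb ?a ?b] => destruct (Nat.ltb_spec a b)
 | |- context [Nat.eqb ?a ?b] => destruct (Nat.eqb_spec a b)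
 end; subst; try lia; try lra; assert (j = m) by lia; subst; lra. Qed.

Lemma BT n lam j : mvmul (n - 1) (mtr Bm) lam j = bt (n - 1) lam j.
Proof. unfold mvmul, mtr. apply BT_gen. Qed.

Lemma transpose_B n mu a : rsum n (fun j => mvmul (n - 1) (mtr Bm) mu j * a j) = rsum (n - 1) (fun i => mu i * mvmul n Bm a i).
Proof. unfold mvmul, mtr. rewrite (rsum_ext n _ (fun j => rsum (n-1) (fun i => Bm i j * mu i * a j))) by (intros; rewrite Rmult_comm, <- rsum_scal; apply rsum_ext; intros; ring).
 rewrite rsum_exchange. apply rsum_ext; intros. rewrite <- rsum_scal. apply rsum_ext; intros; ring. Qed.

Lemma rsum_prefix n i a : (i < n)%nat -> rsum n (fun j => a j * (if Nat.leb j i then 1 else 0)) = rsum (S i) a.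
Proof. induction n; intros H. lia. change (rsum (S n) (fun j => a j * (if Nat.leb j i then 1 else 0))) with
   (rsum n (fun j => a j * (if Nat.leb j i then 1 else 0)) + a n * (if Nat.leb n i then 1 else 0)).
 destruct (Nat.eq_dec i n). subst. rewrite (rsum_ext n _ a) by (intros; destruct (Nat.leb_spec i n); [ring|lia]).
 rewrite Nat.leb_refl. simpl. ring. rewrite IHn by lia. destruct (Nat.leb_spec n i); [lia|ring]. Qed.

Lemma finite_delta m (Q : nat -> R -> Prop) :
  (forall i, (i < m)%nat -> exists d, d > 0 /\ forall x, x < d -> Q i x) ->
  exists d, d > 0 /\ forall x, x < d -> forall i, (i < m)%nat -> Q i x.
Proof. induction m; intros H. exists 1; split; [lra|intros; lia].
 destruct IHm as [d1 [Hd1 H1]]. intros; apply H; lia.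
 destruct (H m ltac:(lia)) as [d2 [Hd2 H2]].
 exists (Rmin d1 d2). split. apply Rmin_pos; auto. intros x Hx i Hi.
 pose proof (Rmin_l d1 d2). pose proof (Rmin_r d1 d2).
 destruct (Nat.eq_dec i m). subst; apply H2; lra. apply H1; [lra|lia]. Qed.

Section Proj.
Variables (n : nat) (proj : vec -> vec).
Hypothesis Hproj : is_proj_D n proj.

Definition lamv (v : vec) (i : nat) : R := rsum (S i) (fun j => v j - proj v j).

Lemma proj_in v : inD n (proj v).
Proof. apply (proj1 (Hproj v)). Qed.

Lemma proj_VI v z : inD n z -> 0 <= ip n (vsub (proj v) v) (vsub z (proj v)).
Proof. intros Hz. pose proof (argmin_ineq n (inD n) (fun _ => 0) v (proj v) z (convex_D n) (convex_zero _) (Hproj v) Hz). lra. Qed.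

Lemma proj_nonexp v v2 : norm2 n (vsub (proj v2) (proj v)) <= norm2 n (vsub v2 v).
Proof. apply (nonexp_norm n (inD n) (fun _ => 0)); auto using convex_D, convex_zero. Qed.

Lemma proj_sum0 v : rsum n (fun j => v j - proj v j) = 0.
Proof.
 assert (forall c, inD n (fun i => proj v i + c)) by (intros c i Hi; pose proof (proj_in v i Hi); lra).
 pose proof (proj_VI v _ (H 1)). pose proof (proj_VI v _ (H (-1))). unfold ip, vsub in *.
 rewrite (rsum_ext n _ (fun j => -1 * (v j - proj v j))) in H0 by (intros; ring).
 rewrite (rsum_ext n _ (fun j => 1 * (v j - proj v j))) in H1 by (intros; ring).
 rewrite rsum_scal in *. lra. Qed.

Lemma lamv_nonpos v i : (i < n - 1)%nat -> lamv v i <= 0.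
Proof. intros Hi. set (z := fun j => proj v j + (if Nat.leb j i then 1 else 0)).
 assert (inD n z). { intros k Hk. pose proof (proj_in v k Hk). unfold z. destruct (Nat.leb_spec (S k) i), (Nat.leb_spec k i); try lia; lra. }
 pose proof (proj_VI v z H). unfold ip, vsub, z in H0.
 rewrite (rsum_ext n _ (fun j => -1 * ((v j - proj v j) * (if Nat.leb j i then 1 else 0)))) in H0 by (intros; ring).
 rewrite rsum_scal, rsum_prefix in H0 by lia. unfold lamv. lra. Qed.

Lemma lamv_compl v i : (i < n - 1)%nat -> mvmul n Bm (proj v) i > 0 -> lamv v i = 0.
Proof. intros Hi Hb. rewrite Bu in Hb by lia. set (e := proj v i - proj v (S i)).
 set (z := fun j => proj v j - e * (if Nat.leb j i then 1 else 0)).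
 assert (inD n z). { intros k Hk. pose proof (proj_in v k Hk). unfold z. destruct (Nat.leb_spec (S k) i), (Nat.leb_spec k i); try lia.
   lra. assert (k = i) by lia. subst. unfold e; lra. lra. }
 pose proof (proj_VI v z H). unfold ip, vsub, z in H0.
 rewrite (rsum_ext n _ (fun j => e * ((v j - proj v j) * (if Nat.leb j i then 1 else 0)))) in H0 by (intros; ring).
 rewrite rsum_scal, rsum_prefix in H0 by lia. pose proof (lamv_nonpos v i Hi). unfold lamv in *.
 assert (0 < e) by (unfold e; lra). nra. Qed.

Lemma lamv_rep v j : (j < n)%nat -> proj v j - v j + mvmul (n - 1) (mtr Bm) (lamv v) j = 0.
Proof. intros Hj. rewrite BT. unfold bt, lamv. pose proof (proj_sum0 v).
 destruct (Nat.ltb_spec j (n-1)).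
 - destruct j. simpl. lra. destruct (Nat.ltb_spec j (n-1)); [|lia].
   change (rsum (S (S j)) (fun j0 => v j0 - proj v j0)) with (rsum (S j) (fun j0 => v j0 - proj v j0) + (v (S j) - proj v (S j))). lra.
 - assert (j = n - 1)%nat by lia. subst. destruct (n - 1)%nat eqn:E.
   assert (n = 1)%nat by lia. subst. simpl in H. lra.
   destruct (Nat.ltb_spec n0 (S n0)); [|lia]. replace n with (S (S n0)) in H by lia.
   change (rsum (S (S n0)) (fun j0 => v j0 - proj v j0)) with (rsum (S n0) (fun j0 => v j0 - proj v j0) + (v (S n0) - proj v (S n0))) in H. lra. Qed.

Lemma lam_unique v lam : (forall j, (j < n)%nat -> proj v j - v j + mvmul (n - 1) (mtr Bm) lam j = 0) ->
  forall i, (i < n - 1)%nat -> lam i = lamv v i.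
Proof. intros H. induction i; intros Hi.
 - specialize (H 0%nat ltac:(lia)). rewrite BT in H. unfold bt in H. destruct (Nat.ltb_spec 0 (n-1)); [|lia].
   unfold lamv. simpl. lra.
 - specialize (H (S i) ltac:(lia)). rewrite BT in H. unfold bt in H. destruct (Nat.ltb_spec (S i) (n-1)); [|lia].
   destruct (Nat.ltb_spec i (n-1)); [|lia]. rewrite IHi in H by lia. unfold lamv in *.
   change (rsum (S (S i)) (fun j => v j - proj v j)) with (rsum (S i) (fun j => v j - proj v j) + (v (S i) - proj v (S i))). lra. Qed.

Lemma kkt_suff v u mu : inD n u -> (forall i, (i < n - 1)%nat -> mu i <= 0) ->
  (forall j, (j < n)%nat -> u j - v j + mvmul (n - 1) (mtr Bm) mu j = 0) ->
  (forall i, (i < n - 1)%nat -> mu i * mvmul n Bm u i = 0) -> veq n (proj v) u.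
Proof. intros Hu Hmu Hrep Hc.
 assert (VI : forall z, inD n z -> 0 <= ip n (vsub u v) (vsub z u)).
 { intros z Hz. unfold ip, vsub.
   rewrite (rsum_ext n _ (fun j => (-1) * (mvmul (n - 1) (mtr Bm) mu j * (z j - u j)))) by (intros j Hj; specialize (Hrep j Hj); replace (u j - v j) with (- mvmul (n - 1) (mtr Bm) mu j) by lra; ring).
   rewrite rsum_scal, transpose_B.
   rewrite (rsum_ext (n-1) _ (fun i => mu i * mvmul n Bm z i - mu i * mvmul n Bm u i)).
   rewrite rsum_minus. rewrite (rsum_zero (n-1) (fun i => mu i * mvmul n Bm u i)) by auto.
   assert (rsum (n - 1) (fun i => mu i * mvmul n Bm z i) <= 0).
   { replace 0 with (rsum (n-1) (fun _ => 0)) by (apply rsum_zero; auto). apply rsum_le. intros i Hi.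
     rewrite Bu by lia. pose proof (Hz i ltac:(lia)). pose proof (Hmu i Hi). nra. }
   lra. intros i Hi. unfold mvmul. rewrite <- Rmult_minus_distr_l, <- rsum_minus. f_equal. apply rsum_ext; intros; ring. }
 pose proof (VI (proj v) (proj_in v)). pose proof (proj2 (Hproj v) u Hu).
 assert (E : sqnorm n (vsub (proj v) v) = sqnorm n (vsub (proj v) u) + 2 * ip n (vsub u v) (vsub (proj v) u) + sqnorm n (vsub u v)).
 { unfold sqnorm, ip, vsub. rewrite (rsum_ext n _ (fun i => ((proj v i - u i)^2 + 2 * ((u i - v i) * (proj v i - u i))) + (u i - v i)^2)) by (intros; ring).
   rewrite !rsum_plus, rsum_scal. ring. }
 assert (sqnorm n (vsub (proj v) u) <= 0) by lra.
 intros i Hi. pose proof (sqnorm_zero _ _ H1 i Hi). unfold vsub in H2. lra. Qed.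

Lemma lamv_diff v v2 i : (i < n)%nat -> Rabs (lamv v2 i - lamv v i) <= 2 * INR n * norm2 n (vsub v2 v).
Proof. intros Hi. unfold lamv. rewrite <- rsum_minus.
 eapply Rle_trans. apply rsum_abs.
 apply Rle_trans with (rsum (S i) (fun _ => 2 * norm2 n (vsub v2 v))).
 apply rsum_le. intros j Hj.
 replace (v2 j - proj v2 j - (v j - proj v j)) with (vsub v2 v j - vsub (proj v2) (proj v) j) by (unfold vsub; ring).
 eapply Rle_trans. apply Rabs_triang. rewrite Rabs_Ropp.
 pose proof (coord_le_norm2 n (vsub v2 v) j ltac:(lia)). pose proof (coord_le_norm2 n (vsub (proj v2) (proj v)) j ltac:(lia)).
 pose proof (proj_nonexp v v2). lra.
 rewrite rsum_const. pose proof (norm2_nonneg n (vsub v2 v)).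
 assert (INR (S i) <= INR n) by (apply le_INR; lia). nra. Qed.

Lemma B_diff v v2 i : (S i < n)%nat -> Rabs (mvmul n Bm (proj v2) i - mvmul n Bm (proj v) i) <= 2 * norm2 n (vsub v2 v).
Proof. intros Hi. rewrite !Bu by auto.
 pose proof (coord_le_norm2 n (vsub (proj v2) (proj v)) i ltac:(lia)). pose proof (coord_le_norm2 n (vsub (proj v2) (proj v)) (S i) Hi).
 pose proof (proj_nonexp v v2). unfold vsub in *.
 replace (proj v2 i - proj v2 (S i) - (proj v i - proj v (S i))) with ((proj v2 i - proj v i) - (proj v2 (S i) - proj v (S i))) by ring.
 eapply Rle_trans. apply Rabs_triang. rewrite Rabs_Ropp. lra. Qed.

Definition stable (v : vec) (d : R) : Prop :=
  d > 0 /\ forall v2, norm2 n (vsub v2 v) < d ->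
   (forall i, (i < n - 1)%nat -> mvmul n Bm (proj v) i > 0 -> mvmul n Bm (proj v2) i > 0) /\
   (forall i, (i < n - 1)%nat -> lamv v i <> 0 -> lamv v2 i <> 0).

Lemma stable_ex v : exists d, stable v d.
Proof.
 destruct (finite_delta (n-1) (fun i x => forall v2, norm2 n (vsub v2 v) = x ->
   (mvmul n Bm (proj v) i > 0 -> mvmul n Bm (proj v2) i > 0) /\ (lamv v i <> 0 -> lamv v2 i <> 0))) as [d [Hd H]].
 - intros i Hi. assert (Hn : 0 <= INR n) by apply pos_INR.
   set (a := mvmul n Bm (proj v) i). set (l := lamv v i).
   exists (Rmin (if Rlt_dec 0 a then a / 2 else 1) (if Req_EM_T l 0 then 1 else Rabs l / (2 * INR n + 1))).
   split. apply Rmin_pos. destruct (Rlt_dec 0 a); lra. destruct (Req_EM_T l 0). lra. apply Rdiv_lt_0_compat. apply Rabs_pos_lt; auto. lra.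
   intros x Hx v2 Ex. pose proof (Rmin_l (if Rlt_dec 0 a then a / 2 else 1) (if Req_EM_T l 0 then 1 else Rabs l / (2 * INR n + 1))).
   pose proof (Rmin_r (if Rlt_dec 0 a then a / 2 else 1) (if Req_EM_T l 0 then 1 else Rabs l / (2 * INR n + 1))).
   split.
   + intros Ha. destruct (Rlt_dec 0 a); [|fold a in Ha; lra]. pose proof (B_diff v v2 i ltac:(lia)). fold a in H1. rewrite Ex in H1.
     apply abs_le_between in H1. lra.
   + intros Hl. fold l in Hl. destruct (Req_EM_T l 0); [congruence|]. pose proof (lamv_diff v v2 i ltac:(lia)). fold l in H1. rewrite Ex in H1.
     assert (0 <= x) by (rewrite <- Ex; apply norm2_nonneg).
     assert (x * (2 * INR n + 1) < Rabs l). { apply Rlt_le_trans with (Rabs l / (2 * INR n + 1) * (2 * INR n + 1)).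
       apply Rmult_lt_compat_r; lra. right; field; lra. }
     intros E. rewrite E in H1. replace (0 - l) with (-l) in H1 by ring. rewrite Rabs_Ropp in H1. nra.
 - exists d. split; auto. intros v2 Hv2. split; intros i Hi; apply (H _ Hv2 i Hi v2 eq_refl). Qed.

Lemma segment v d v2 s : stable v d -> norm2 n (vsub v2 v) < d -> 0 <= s <= 1 ->
  veq n (proj (lin v v2 s)) (lin (proj v) (proj v2) s).
Proof. intros [Hd Hst] Hv2 Hs. destruct (Hst v2 Hv2) as [Ha Hl].
 apply kkt_suff with (mu := lin (lamv v) (lamv v2) s).
 - apply convex_D; auto using proj_in.
 - intros i Hi. pose proof (lamv_nonpos v i Hi). pose proof (lamv_nonpos v2 i Hi). unfold lin. nra.
 - intros j Hj. pose proof (lamv_rep v j Hj). pose proof (lamv_rep v2 j Hj). rewrite BT in *. unfold bt, lin in *.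
   destruct (Nat.ltb_spec j (n-1)); destruct j; try (destruct (Nat.ltb_spec j (n-1))); nra.
 - intros i Hi. assert (E : mvmul n Bm (lin (proj v) (proj v2) s) i = lin (fun k => mvmul n Bm (proj v) k) (fun k => mvmul n Bm (proj v2) k) s i).
   { rewrite !Bu by lia. unfold lin. rewrite !Bu by lia. ring. }
   rewrite E. unfold lin.
   assert (H : 0 <= mvmul n Bm (proj v) i) by (rewrite Bu by lia; pose proof (proj_in v i ltac:(lia)); lra).
   assert (H0 : 0 <= mvmul n Bm (proj v2) i) by (rewrite Bu by lia; pose proof (proj_in v2 i ltac:(lia)); lra).
   destruct (Req_dec (lamv v i) 0) as [E1|E1]; destruct (Req_dec (lamv v2 i) 0) as [E2|E2].
   + rewrite E1, E2. ring.
   + assert (B2 : mvmul n Bm (proj v2) i = 0). { destruct (Req_dec (mvmul n Bm (proj v2) i) 0); auto. exfalso. apply E2. apply lamv_compl; auto. lra. }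
     assert (B1 : mvmul n Bm (proj v) i = 0). { destruct (Req_dec (mvmul n Bm (proj v) i) 0); auto. exfalso. pose proof (Ha i Hi ltac:(lra)). lra. }
     rewrite B1, B2; ring.
   + assert (B1 : mvmul n Bm (proj v) i = 0). { destruct (Req_dec (mvmul n Bm (proj v) i) 0); auto. exfalso. apply E1. apply lamv_compl; auto. lra. }
     pose proof (Hl i Hi E1). contradiction.
   + assert (B1 : mvmul n Bm (proj v) i = 0). { destruct (Req_dec (mvmul n Bm (proj v) i) 0); auto. exfalso. apply E1. apply lamv_compl; auto. lra. }
     assert (B2 : mvmul n Bm (proj v2) i = 0). { destruct (Req_dec (mvmul n Bm (proj v2) i) 0); auto. exfalso. apply E2. apply lamv_compl; auto. lra. }
     rewrite B1, B2; ring.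
Qed.
End Proj.

Definition Tf (b a : R) : R := if Rlt_dec b a then a - b else if Rlt_dec a (-b) then a + b else 0.

Lemma Tf_mono b a c : 0 <= b -> a <= c -> Tf b a <= Tf b c.
Proof. intros Hb H. unfold Tf. destruct (Rlt_dec b a), (Rlt_dec a (-b)), (Rlt_dec b c), (Rlt_dec c (-b)); lra. Qed.
Lemma Tf_0 a : Tf 0 a = a.
Proof. unfold Tf. destruct (Rlt_dec 0 a), (Rlt_dec a (-0)); lra. Qed.
Lemma Tf_opt b u z : 0 <= b -> /2 * (Tf b u - u)^2 + b * Rabs (Tf b u) <= /2 * (z - u)^2 + b * Rabs z.
Proof. intros Hb. pose proof (pow2_ge_0 (z - u + b)). pose proof (pow2_ge_0 (z - u - b)). pose proof (pow2_ge_0 (z - u)).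
 unfold Tf. destruct (Rlt_dec b u), (Rlt_dec u (-b)); unfold Rabs;
 repeat match goal with |- context [Rcase_abs ?x] => destruct (Rcase_abs x) end; nra. Qed.

Lemma inD_chain m x i j : inD m x -> (i <= j)%nat -> (j < m)%nat -> x j <= x i.
Proof. intros H Hij Hj. induction j. replace i with 0%nat by lia; lra.
 destruct (Nat.eq_dec i (S j)). subst; lra. pose proof (H j Hj). assert (x j <= x i) by (apply IHj; lia). lra. Qed.

Lemma pairsum_D m x : inD m x -> pairsum m x = rsum m (fun k => (INR m - 2 * INR k - 1) * x k).
Proof. induction m; intros H. reflexivity.
 unfold pairsum in *. change (rsum (S m) (fun j => rsum j (fun i => Rabs (x i - x j)))) with
   (rsum m (fun j => rsum j (fun i => Rabs (x i - x j))) + rsum m (fun i => Rabs (x i - x m))).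
 rewrite IHm by (intros i Hi; apply H; lia).
 change (rsum (S m) (fun k => (INR (S m) - 2 * INR k - 1) * x k)) with
   (rsum m (fun k => (INR (S m) - 2 * INR k - 1) * x k) + (INR (S m) - 2 * INR m - 1) * x m).
 rewrite (rsum_ext m (fun i => Rabs (x i - x m)) (fun i => x i - x m)).
 rewrite (rsum_ext m (fun k => (INR (S m) - 2 * INR k - 1) * x k) (fun k => (INR m - 2 * INR k - 1) * x k + x k)) by (intros; rewrite S_INR; ring).
 rewrite !rsum_plus, rsum_minus, rsum_const, S_INR. ring.
 intros i Hi. apply Rabs_pos_eq. pose proof (inD_chain (S m) x i m H ltac:(lia) ltac:(lia)). lra. Qed.

Section Sorted.
Variables (n : nat) (b r : R) (prox proj : vec -> vec).
Hypothesis Hb : 0 <= b.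
Hypothesis Hr : 0 <= r.
Hypothesis Hprox : is_prox_map n (pen n b r) prox.
Hypothesis Hproj : is_proj_D n proj.

Lemma sorted_formula y : inD n y -> veq n (prox y) (fun i => Tf b (proj (vsub y (vscal r (wvec n))) i)).
Proof. intros Hy. set (v := vsub y (vscal r (wvec n))). set (u := proj v). set (t := fun i => Tf b (u i)).
 set (p := prox y).
 assert (Hp : inD n p) by (apply (prox_sorted n b r); auto).
 assert (Hu : inD n u) by (apply proj_in; auto).
 assert (Ht : inD n t) by (intros i Hi; apply Tf_mono; auto; apply Hu; auto).
 assert (Obj : forall z, inD n z -> / 2 * sqnorm n (vsub z y) + pen n b r z =
    / 2 * sqnorm n (vsub z v) + b * l1norm n z + (r * rsum n (fun i => y i * wvec n i) - /2 * r^2 * rsum n (fun i => (wvec n i)^2))).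
 { intros z Hz. unfold pen. rewrite pairsum_D by auto.
   assert (E1 : sqnorm n (vsub z v) = rsum n (fun i => (z i - y i)^2 + (2*r) * ((z i - y i) * wvec n i) + r^2 * (wvec n i)^2)).
   { unfold sqnorm. apply rsum_ext. intros i Hi. unfold v, vsub, vscal. ring. }
   assert (E2 : rsum n (fun i => (z i - y i) * wvec n i) = rsum n (fun k => (INR n - 2 * INR k - 1) * z k) - rsum n (fun i => y i * wvec n i))
     by (rewrite <- rsum_minus; apply rsum_ext; intros; unfold wvec; ring).
   rewrite E1, !rsum_plus, !rsum_scal, E2. unfold sqnorm, vsub. field. }
 assert (G : forall z, inD n z -> / 2 * sqnorm n (vsub t v) + b * l1norm n t <= / 2 * sqnorm n (vsub z v) + b * l1norm n z).
 { intros z Hz.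
   assert (D : / 2 * sqnorm n (vsub z v) + b * l1norm n z - (/ 2 * sqnorm n (vsub t v) + b * l1norm n t) =
     rsum n (fun i => (/2 * (z i - u i)^2 + b * Rabs (z i)) - (/2 * (t i - u i)^2 + b * Rabs (t i)))
     + ip n (vsub u v) (vsub z u) - ip n (vsub u v) (vsub t u)).
   { transitivity (rsum n (fun i => (/2 * (z i - v i)^2 + b * Rabs (z i)) - (/2 * (t i - v i)^2 + b * Rabs (t i)))).
     - rewrite rsum_minus, !rsum_plus, !rsum_scal. unfold sqnorm, l1norm, vsub. ring.
     - unfold ip, vsub. rewrite <- rsum_plus, <- rsum_minus. apply rsum_ext. intros; field. }
   assert (A1 : 0 <= rsum n (fun i => (/2 * (z i - u i)^2 + b * Rabs (z i)) - (/2 * (t i - u i)^2 + b * Rabs (t i)))).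
   { apply rsum_nonneg. intros i Hi. pose proof (Tf_opt b (u i) (z i) Hb). unfold t. lra. }
   assert (A2 : 0 <= ip n (vsub u v) (vsub z u)).
   { pose proof (proj_VI n proj Hproj v z Hz). auto. }
   assert (A3 : ip n (vsub u v) (vsub t u) = 0).
   { unfold ip, vsub.
     rewrite (rsum_ext n _ (fun j => (-1) * (mvmul (n - 1) (mtr Bm) (lamv proj v) j * (t j - u j)))) by
       (intros j Hj; pose proof (lamv_rep n proj Hproj v j Hj); fold u in H; replace (u j - v j) with (- mvmul (n - 1) (mtr Bm) (lamv proj v) j) by lra; ring).
     rewrite rsum_scal, transpose_B. rewrite rsum_zero. ring. intros i Hi.
     destruct (Req_dec (lamv proj v i) 0) as [E|E]. rewrite E; ring.
     assert (Bu0 : mvmul n Bm u i = 0).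
     { destruct (Req_dec (mvmul n Bm u i) 0); auto. exfalso. apply E. apply (lamv_compl n proj Hproj v i Hi). fold u.
       rewrite Bu by lia. rewrite Bu in H by lia. pose proof (Hu i ltac:(lia)). lra. }
     rewrite Bu in * by lia. unfold t. replace (u (S i)) with (u i) by lra. ring. }
   lra. }
 assert (Hmin : is_argmin_on n (fun _ => True) (pen n b r) y t).
 { split; auto. intros z _. pose proof (proj2 (Hprox y) z I). fold p in H.
   rewrite (Obj t Ht). pose proof (Obj p Hp). pose proof (G p Hp). lra. }
 apply (prox_unique n b r prox Hb Hr Hprox y t Hmin). Qed.

Lemma perm_formula s y : is_perm n s -> inD n (vcomp y s) ->
  veq n (vcomp (prox y) s) (fun i => Tf b (proj (vsub (vcomp y s) (vscal r (wvec n))) i)).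
Proof. intros Hs Hy i Hi. rewrite (prox_equiv n b r prox Hb Hr Hprox s y Hs i Hi). apply sorted_formula; auto. Qed.
End Sorted.

Lemma Srho_prox n rho Srho : is_prox_map n (fun x => rho * pairsum n x) Srho -> is_prox_map n (pen n 0 rho) Srho.
Proof. intros H y. destruct (H y) as [_ H2]. split; auto. intros z _. unfold pen. specialize (H2 z I). lra. Qed.

Lemma mv_ext c A x y : veq c x y -> forall i, mvmul c A x i = mvmul c A y i.
Proof. intros H i. unfold mvmul. apply rsum_ext; intros; rewrite H; auto. Qed.
Lemma mv_meq r c A A' x i : meq r c A A' -> (i < r)%nat -> mvmul c A x i = mvmul c A' x i.
Proof. intros H Hi. unfold mvmul. apply rsum_ext; intros; rewrite H; auto. Qed.
Lemma mv_assoc c k A B x i : mvmul c (mmul k A B) x i = mvmul k A (mvmul c B x) i.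
Proof. unfold mvmul, mmul. rewrite (rsum_ext c _ (fun l => rsum k (fun r => A i r * B r l * x l))) by
  (intros; rewrite Rmult_comm, <- rsum_scal; apply rsum_ext; intros; ring).
 rewrite rsum_exchange. apply rsum_ext; intros. rewrite <- rsum_scal. apply rsum_ext; intros; ring. Qed.
Lemma mv_idm k x i : (i < k)%nat -> mvmul k idm x i = x i.
Proof. intros Hi. unfold mvmul, idm. rewrite (rsum_single k i); auto. rewrite Nat.eqb_refl; ring.
 intros j Hj Hne. destruct (Nat.eqb_spec i j); [lia|ring]. Qed.
Lemma mv_plus c A x y i : mvmul c A (fun j => x j + y j) i = mvmul c A x i + mvmul c A y i.
Proof. unfold mvmul. rewrite <- rsum_plus. apply rsum_ext; intros; ring. Qed.

Lemma rsum_shift m f : rsum (S m) f = f 0%nat + rsum m (fun r => f (S r)).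
Proof. induction m. simpl; ring. change (rsum (S (S m)) f) with (rsum (S m) f + f (S m)). rewrite IHm. simpl. ring. Qed.
Lemma lsum_nth l h : lsum l h = rsum (length l) (fun r => h (nth r l 0%nat)).
Proof. induction l. simpl; auto. change (length (a :: l)) with (S (length l)). rewrite rsum_shift. simpl lsum. rewrite IHl. auto. Qed.

Lemma rsum_sub m K h : NoDup K -> (forall i, In i K -> (i < m)%nat) ->
  (forall i, (i < m)%nat -> ~ In i K -> h i = 0) ->
  rsum m h = rsum (length K) (fun r => h (nth r K 0%nat)).
Proof. intros ND HK Hh. rewrite <- lsum_nth, rsum_lsum.
 set (F := filter (fun i => if in_dec Nat.eq_dec i K then false else true) (seq 0 m)).
 assert (P : Permutation (seq 0 m) (K ++ F)).
 { apply NoDup_Permutation. apply seq_NoDup. apply NoDup_app; auto. apply NoDup_filter, seq_NoDup.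
   intros a Ha HF. apply filter_In in HF. destruct HF as [_ HF]. destruct (in_dec Nat.eq_dec a K); congruence.
   intros x; split; intros Hx.
   - apply in_app_iff. destruct (in_dec Nat.eq_dec x K); [left; auto| right]. apply filter_In. split; auto. destruct (in_dec Nat.eq_dec x K); tauto.
   - apply in_app_iff in Hx. destruct Hx as [Hx|Hx]. apply in_seq. specialize (HK x Hx). lia. apply filter_In in Hx; tauto. }
 rewrite (lsum_perm _ _ h P), lsum_app. rewrite (lsum_zero F). ring.
 intros i Hi. apply filter_In in Hi. destruct Hi as [Hi1 Hi2]. apply in_seq in Hi1. apply Hh. lia.
 destruct (in_dec Nat.eq_dec i K); [congruence|auto]. Qed.

Lemma Q_apply n K W Qh a pst mu :
  NoDup K -> (forall i, In i K -> (i < n - 1)%nat) ->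
  is_inverse (length K) (mmul n (BK K) (mtr (BK K))) W ->
  meq n n Qh (msub idm (mmul (length K) (mtr (BK K)) (mmul (length K) W (BK K)))) ->
  (forall j, (j < n)%nat -> pst j - a j + mvmul (n - 1) (mtr Bm) mu j = 0) ->
  (forall i, (i < n - 1)%nat -> mu i <> 0 -> In i K) ->
  (forall i, In i K -> mvmul n Bm pst i = 0) ->
  veq n (mvmul n Qh a) pst.
Proof. intros ND HK [HW1 HW2] HQ Hrep Hsupp HB j Hj.
 set (muK := fun r => mu (nth r K 0%nat)).
 assert (BTK : forall j, mvmul (n - 1) (mtr Bm) mu j = mvmul (length K) (mtr (BK K)) muK j).
 { intros l. unfold mvmul, mtr, BK, muK. apply rsum_sub; auto. intros i Hi HnK.
   destruct (Req_dec (mu i) 0) as [E|E]. rewrite E; ring. exfalso; apply HnK; auto. }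
 assert (Ha : veq n a (fun l => pst l + mvmul (length K) (mtr (BK K)) muK l)).
 { intros l Hl. rewrite <- BTK. specialize (Hrep l Hl). lra. }
 assert (HBa : veq (length K) (mvmul n (BK K) a) (mvmul (length K) (mmul n (BK K) (mtr (BK K))) muK)).
 { intros r Hr. rewrite (mv_ext n _ _ _ Ha). rewrite mv_plus.
   assert (E1 : mvmul n (BK K) pst r = 0). { unfold BK. apply HB. apply nth_In. auto. }
   rewrite E1. rewrite mv_assoc. ring. }
 assert (HW : veq (length K) (mvmul (length K) W (mvmul n (BK K) a)) muK).
 { intros r Hr. rewrite (mv_ext (length K) W _ _ HBa). rewrite <- mv_assoc. rewrite (mv_meq (length K) (length K) _ idm muK r HW1 Hr). apply mv_idm; auto. }
 rewrite (mv_meq n n _ _ a j HQ Hj). unfold msub.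
 unfold mvmul at 1. rewrite (rsum_ext n _ (fun l => idm j l * a l - mmul (length K) (mtr (BK K)) (mmul (length K) W (BK K)) j l * a l)) by (intros; cbv beta; ring).
 rewrite rsum_minus. fold (mvmul n idm a j). fold (mvmul n (mmul (length K) (mtr (BK K)) (mmul (length K) W (BK K))) a j).
 rewrite mv_idm by auto. rewrite mv_assoc. rewrite (mv_ext (length K) _ _ _ (fun r Hr => mv_assoc n (length K) W (BK K) a r)).
 rewrite (mv_ext (length K) _ _ _ HW). rewrite <- BTK. specialize (Hrep j Hj). lra. Qed.

Lemma inD_ext n a b : veq n a b -> inD n a -> inD n b.
Proof. intros E H i Hi. rewrite <- !E by lia. apply H; auto. Qed.

Lemma proj_ext n proj a b : is_proj_D n proj -> veq n a b -> veq n (proj a) (proj b).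
Proof. intros Hp E. apply (argmin_unique n (inD n) (fun _ => 0) a b); auto using convex_D, convex_zero. Qed.

Lemma rsum_trunc m k f : (k <= m)%nat -> (forall i, (k <= i)%nat -> (i < m)%nat -> f i = 0) -> rsum m f = rsum k f.
Proof. induction m; intros Hk H. replace k with 0%nat by lia; auto.
 destruct (Nat.eq_dec k (S m)). subst; auto. simpl. rewrite IHm by (try lia; intros; apply H; lia). rewrite H by lia. ring. Qed.

Definition cnt n (c : vec) (t : R) : R := rsum n (fun i => if Rle_dec t (c i) then 1 else 0).

Lemma cnt_ge n c t k : inD n c -> (k < n)%nat -> t <= c k -> INR (S k) <= cnt n c t.
Proof. intros H Hk Ht. unfold cnt. apply Rle_trans with (rsum (S k) (fun i => if Rle_dec t (c i) then 1 else 0)).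
 rewrite (rsum_ext (S k) _ (fun _ => 1)). rewrite rsum_const; lra.
 intros i Hi. destruct (Rle_dec t (c i)); auto. exfalso. pose proof (inD_chain n c i k H ltac:(lia) Hk). lra.
 apply rsum_le_sub. lia. intros; destruct (Rle_dec t (c i)); lra. Qed.

Lemma cnt_le n c t k : inD n c -> (k < n)%nat -> c k < t -> cnt n c t <= INR k.
Proof. intros H Hk Ht. unfold cnt. rewrite (rsum_trunc n k) by (try lia; intros i Hi1 Hi2; destruct (Rle_dec t (c i)); auto;
   pose proof (inD_chain n c k i H Hi1 Hi2); lra).
 apply Rle_trans with (rsum k (fun _ => 1)). apply rsum_le; intros; destruct (Rle_dec t (c i)); lra. rewrite rsum_const; lra. Qed.

Lemma cnt_perm n x s t : is_perm n s -> cnt n (vcomp x s) t = cnt n x t.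
Proof. intros Hs. unfold cnt, vcomp. apply (rsum_perm n s (fun i => if Rle_dec t (x i) then 1 else 0)); auto. Qed.

Lemma sorted_unique n x s1 s2 : is_perm n s1 -> is_perm n s2 -> inD n (vcomp x s1) -> inD n (vcomp x s2) ->
  veq n (vcomp x s1) (vcomp x s2).
Proof. intros H1 H2 D1 D2.
 assert (Hle : forall sa sb, is_perm n sa -> is_perm n sb -> inD n (vcomp x sa) -> inD n (vcomp x sb) -> forall k, (k < n)%nat -> vcomp x sa k <= vcomp x sb k).
 { intros sa sb Ha Hb Da Db k Hk. destruct (Rle_dec (vcomp x sa k) (vcomp x sb k)); auto. exfalso.
   pose proof (cnt_ge n (vcomp x sa) (vcomp x sa k) k Da Hk ltac:(lra)).
   pose proof (cnt_le n (vcomp x sb) (vcomp x sa k) k Db Hk ltac:(lra)).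
   rewrite !cnt_perm in * by auto. rewrite S_INR in H. lra. }
 intros k Hk. pose proof (Hle s1 s2 H1 H2 D1 D2 k Hk). pose proof (Hle s2 s1 H2 H1 D2 D1 k Hk). lra. Qed.

Lemma gap_ex n (x : vec) : exists d, d > 0 /\ forall i j, (i < n)%nat -> (j < n)%nat -> x i < x j -> 2 * d < x j - x i.
Proof.
 destruct (finite_delta n (fun i e => forall j, (j < n)%nat -> x i < x j -> 2 * e < x j - x i)) as [d [Hd H]].
 - intros i Hi. destruct (finite_delta n (fun j e => x i < x j -> 2 * e < x j - x i)) as [d [Hd H]].
   + intros j Hj. destruct (Rlt_dec (x i) (x j)).
     exists ((x j - x i) / 2). split. lra. intros e He _. lra.
     exists 1. split. lra. intros e _ Hc. lra.
   + exists d. split; [auto|]. intros e He j Hj. apply H; auto.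
 - exists (d / 2). split. lra. intros i j Hi Hj Hx. apply (H (d/2) ltac:(lra) i Hi j Hj Hx). Qed.

Lemma sort_transfer n x dx s d : is_perm n s -> d > 0 ->
  (forall i j, (i < n)%nat -> (j < n)%nat -> x i < x j -> 2 * d < x j - x i) ->
  norm2 n dx < d -> inD n (vcomp (vadd x dx) s) -> inD n (vcomp x s).
Proof. intros Hs Hd Hg Hdx HD i Hi. destruct (Rle_dec (vcomp x s (S i)) (vcomp x s i)); auto. exfalso.
 pose proof (Hg (s i) (s (S i)) (proj1 Hs i ltac:(lia)) (proj1 Hs (S i) Hi)). unfold vcomp in *.
 specialize (HD i Hi). unfold vcomp, vadd in HD.
 pose proof (coord_le_norm2 n dx (s i) (proj1 Hs i ltac:(lia))). pose proof (coord_le_norm2 n dx (s (S i)) (proj1 Hs (S i) Hi)).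
 apply abs_le_between in H0. apply abs_le_between in H1. lra. Qed.

Lemma abs_lt_between a b : Rabs a < b -> -b < a < b.
Proof. unfold Rabs; destruct (Rcase_abs a); intros; lra. Qed.

Ltac abs_rw x := let H := fresh in destruct (Rcase_abs x) as [H|H];
  [rewrite (Rabs_left x H) in * | rewrite (Rabs_right x H) in *].

Lemma T_local b s : b > 0 -> exists d, d > 0 /\ forall s' q, Rabs (s' - s) < d ->
  (Rabs s' < b -> q = 0) -> (Rabs s' = b -> q = 0 \/ q = 1) -> (Rabs s' > b -> q = 1) ->
  Tf b s' - Tf b s = q * (s' - s).
Proof. intros Hb. destruct (Req_EM_T (Rabs s) b) as [E|E].
 - exists b. split; auto. intros s' q H H1 H2 H3. apply abs_lt_between in H.
   abs_rw s; abs_rw s'; unfold Tf;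
   destruct (Rlt_dec b s'), (Rlt_dec s' (-b)), (Rlt_dec b s), (Rlt_dec s (-b)); try lra;
   try (rewrite H3 by lra; lra); try (rewrite H1 by lra; lra);
   try (destruct (H2 ltac:(lra)) as [-> | ->]; lra); try (replace (s' - s) with 0 by lra; ring);
   try (destruct (Rlt_dec (-s') b); [rewrite H1 by lra; ring | replace (s'-s) with 0 by lra; ring]);
   try (destruct (Rlt_dec s' b); [rewrite H1 by lra; ring | replace (s'-s) with 0 by lra; ring]).
 - assert (Hpos : 0 < Rabs (Rabs s - b)) by (apply Rabs_pos_lt; intros C; apply E; lra).
   exists (Rabs (Rabs s - b)). split; auto.
   intros s' q H H1 H2 H3. apply abs_lt_between in H.
   abs_rw s; abs_rw s'; try abs_rw (s - b); try abs_rw (-s - b); unfold Tf;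
   destruct (Rlt_dec b s'), (Rlt_dec s' (-b)), (Rlt_dec b s), (Rlt_dec s (-b)); try lra;
   try (rewrite H3 by lra; lra); try (rewrite H1 by lra; lra). Qed.

Lemma small_ta t a m : m > 0 -> 0 < t -> t < m / (Rabs a + 1) -> - m < t * a < m /\ t * a = t * a.
Proof. intros Hm Ht H. pose proof (Rabs_pos a).
 assert (t * (Rabs a + 1) < m). { apply Rlt_le_trans with (m / (Rabs a + 1) * (Rabs a + 1)). apply Rmult_lt_compat_r; lra. right; field; lra. }
 unfold Rabs in *. destruct (Rcase_abs a); split; try nra. Qed.

Lemma T_ray b s a : b > 0 -> exists t1 c, t1 > 0 /\ forall t, 0 < t < t1 -> Tf b (s + t * a) = Tf b s + t * c.
Proof. intros Hb. pose proof (Rabs_pos a).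
 assert (Hpos : forall m, m > 0 -> m / (Rabs a + 1) > 0) by (intros; apply Rdiv_lt_0_compat; lra).
 unfold Tf. destruct (Rlt_dec b s).
 - exists ((s - b) / (Rabs a + 1)), a. split. apply Hpos; lra. intros t [Ht1 Ht2].
   destruct (small_ta t a (s - b) ltac:(lra) Ht1 Ht2) as [[H1 H2] _].
   destruct (Rlt_dec b (s + t * a)); [ring|lra].
 - destruct (Rlt_dec s (-b)).
   + exists ((-b - s) / (Rabs a + 1)), a. split. apply Hpos; lra. intros t [Ht1 Ht2].
     destruct (small_ta t a (-b - s) ltac:(lra) Ht1 Ht2) as [[H1 H2] _].
     destruct (Rlt_dec b (s + t * a)); [lra|]. destruct (Rlt_dec (s + t * a) (-b)); [ring|lra].
   + destruct (Req_EM_T s b).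
     * subst. destruct (Rlt_dec 0 a).
       -- exists 1, a. split. lra. intros t [Ht1 Ht2]. destruct (Rlt_dec b (b + t * a)). ring. nra.
       -- exists (2 * b / (Rabs a + 1)), 0. split. apply Hpos; lra. intros t [Ht1 Ht2].
          destruct (small_ta t a (2 * b) ltac:(lra) Ht1 Ht2) as [[H1 H2] _].
          destruct (Rlt_dec b (b + t * a)). nra. destruct (Rlt_dec (b + t * a) (-b)). lra. ring.
     * destruct (Req_EM_T s (-b)).
       -- subst. destruct (Rlt_dec a 0).
          ++ exists 1, a. split. lra. intros t [Ht1 Ht2]. destruct (Rlt_dec b (-b + t * a)). nra.
             destruct (Rlt_dec (-b + t * a) (-b)). ring. nra.
          ++ exists (2 * b / (Rabs a + 1)), 0. split. apply Hpos; lra. intros t [Ht1 Ht2].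
             destruct (small_ta t a (2 * b) ltac:(lra) Ht1 Ht2) as [[H1 H2] _].
             destruct (Rlt_dec b (-b + t * a)). lra. destruct (Rlt_dec (-b + t * a) (-b)). nra. ring.
       -- exists (Rmin (b - s) (s + b) / (Rabs a + 1)), 0. split. apply Hpos. apply Rmin_pos; lra.
          intros t [Ht1 Ht2]. pose proof (Rmin_l (b - s) (s + b)) as M1. pose proof (Rmin_r (b - s) (s + b)) as M2.
          assert (Mp : Rmin (b - s) (s + b) > 0) by (apply Rmin_pos; lra).
          destruct (small_ta t a (Rmin (b - s) (s + b)) Mp Ht1 Ht2) as [[H1 H2] _].
          destruct (Rlt_dec b (s + t * a)). lra. destruct (Rlt_dec (s + t * a) (-b)). lra. ring. Qed.

Lemma finite_choice m (F : nat -> R -> R) :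
  (forall j, (j < m)%nat -> exists t1 c, t1 > 0 /\ forall t, 0 < t < t1 -> F j t = t * c) ->
  exists t1 (c : vec), t1 > 0 /\ forall j, (j < m)%nat -> forall t, 0 < t < t1 -> F j t = t * c j.
Proof. induction m; intros H. exists 1, (fun _ => 0). split; [lra|intros; lia].
 destruct IHm as [t1 [c [Ht1 Hc]]]. intros; apply H; lia.
 destruct (H m ltac:(lia)) as [t2 [c2 [Ht2 Hc2]]].
 exists (Rmin t1 t2), (fun k => if Nat.eqb k m then c2 else c k). split. apply Rmin_pos; auto.
 intros j Hj t Ht. pose proof (Rmin_l t1 t2). pose proof (Rmin_r t1 t2).
 destruct (Nat.eqb_spec j m). subst. apply Hc2; lra. apply Hc; [lia|lra]. Qed.

Lemma mv_minus c A x y i : mvmul c A (fun j => x j - y j) i = mvmul c A x i - mvmul c A y i.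
Proof. unfold mvmul. rewrite <- rsum_minus. apply rsum_ext; intros; ring. Qed.
Lemma mv_diag n q x i : (i < n)%nat -> mvmul n (diagm q) x i = q i * x i.
Proof. intros Hi. unfold mvmul, diagm. rewrite (rsum_single n i); auto. rewrite Nat.eqb_refl; auto.
 intros j Hj Hne. destruct (Nat.eqb_spec i j); [lia|ring]. Qed.

Section Main.
Variables (n : nat) (beta rho : R) (prox Srho proj : vec -> vec) (Psel : vec -> nat -> nat).
Hypothesis Hbeta : beta > 0.
Hypothesis Hrho : rho > 0.
Hypothesis Hprox : is_prox_map n (pen n beta rho) prox.
Hypothesis HS0 : is_prox_map n (fun x => rho * pairsum n x) Srho.
Hypothesis Hproj : is_proj_D n proj.
Hypothesis Hsel : is_sort_perm_sel n Psel.

Let HS : is_prox_map n (pen n 0 rho) Srho := Srho_prox n rho Srho HS0.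


Lemma sel_perm y : is_perm n (Psel y).
Proof. apply (proj1 (Hsel y)). Qed.
Lemma sel_sorted y : inD n (vcomp y (Psel y)).
Proof. apply (inD_ext n (mvmul n (permm (Psel y)) y)). apply permm_mv. apply (proj1 (sel_perm y)). apply (proj2 (Hsel y)). Qed.

Lemma S_formula y s : is_perm n s -> inD n (vcomp y s) -> veq n (vcomp (Srho y) s) (proj (vsub (vcomp y s) (vscal rho (wvec n)))).
Proof. intros Hs Hy i Hi. rewrite (perm_formula n 0 rho Srho proj ltac:(lra) ltac:(lra) HS Hproj s y Hs Hy i Hi). apply Tf_0. Qed.

Lemma prox_TS y : veq n (prox y) (fun i => Tf beta (Srho y i)).
Proof. intros j Hj. set (s := Psel y). assert (Hs : is_perm n s) by apply sel_perm.
 destruct (sinv_spec n s j Hs Hj) as [Hi E]. set (i := sinv n s j) in *.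
 pose proof (perm_formula n beta rho prox proj ltac:(lra) ltac:(lra) Hprox Hproj s y Hs (sel_sorted y) i Hi).
 pose proof (S_formula y s Hs (sel_sorted y) i Hi). unfold vcomp in *. rewrite E in *. rewrite H, H0. auto. Qed.

Lemma Srho_nonexp y z : norm2 n (vsub (Srho y) (Srho z)) <= norm2 n (vsub y z).
Proof. apply (nonexp_norm n (fun _ => True) (pen n 0 rho)); auto using convex_True. apply convex_pen; lra. Qed.


Lemma partA x gamma : exists C delta, C > 0 /\ delta > 0 /\
       forall dx : vec, 0 < norm2 n dx < delta ->
       forall V : mat, Mset n beta rho Srho proj Psel (vadd x dx) V ->
         norm2 n (vsub (vsub (prox (vadd x dx)) (prox x)) (mvmul n V dx))
           <= C * Rpower (norm2 n dx) (1 + gamma).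
Proof.
 set (s0 := Psel x). set (v0 := vsub (vcomp x s0) (vscal rho (wvec n))).
 destruct (stable_ex n proj Hproj v0) as [d1 Hst].
 assert (Hd1 : d1 > 0) by apply (proj1 Hst).
 destruct (gap_ex n x) as [dg [Hdg Hg]].
 destruct (finite_delta n (fun i e => forall s' q, Rabs (s' - Srho x i) <= e -> (Rabs s' < beta -> q = 0) ->
    (Rabs s' = beta -> q = 0 \/ q = 1) -> (Rabs s' > beta -> q = 1) -> Tf beta s' - Tf beta (Srho x i) = q * (s' - Srho x i))) as [dT [HdT HT]].
 { intros i Hi. destruct (T_local beta (Srho x i) Hbeta) as [d [Hd H]]. exists d; split; auto. intros e He s' q Hs'. apply H. lra. }
 exists 1, (Rmin d1 (Rmin dg dT)). split; [lra|]. split. apply Rmin_pos; auto. apply Rmin_pos; auto.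
 intros dx [Hdx0 Hdx] V HV.
 pose proof (Rmin_l d1 (Rmin dg dT)). pose proof (Rmin_r d1 (Rmin dg dT)). pose proof (Rmin_l dg dT). pose proof (Rmin_r dg dT).
 destruct HV as [_ [Th [Q [[q [Hq HTh]] [HQS HV]]]]].
 unfold Q_S in HQS. destruct HQS as [Qh [[K [[ND [[lam [HM Hsupp]] [HI _]]] [W [HW HQh]]]] HQ]].
 set (y' := vadd x dx) in *. set (s := Psel y') in *. set (P := permm s) in *.
 set (v' := vsub (mvmul n P y') (vscal rho (wvec n))) in *.
 assert (Hs : is_perm n s) by apply sel_perm.
 assert (Hys : inD n (vcomp y' s)) by apply sel_sorted.
 assert (Hxs : inD n (vcomp x s)) by (apply (sort_transfer n x dx s dg); auto; lra).
 assert (Exs : veq n (vcomp x s) (vcomp x s0)) by (apply sorted_unique; auto; apply sel_perm || apply sel_sorted).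
 assert (HPy : veq n (mvmul n P y') (vcomp y' s)) by (apply permm_mv; apply (proj1 Hs)).
 assert (HPdx : veq n (mvmul n P dx) (vcomp dx s)) by (apply permm_mv; apply (proj1 Hs)).
 assert (Hvv : veq n (vsub v' v0) (vcomp dx s)).
 { intros i Hi. unfold v', v0, vsub. rewrite HPy by auto. rewrite <- Exs by auto. unfold vcomp, y', vadd. ring. }
 assert (Hnv : norm2 n (vsub v' v0) < d1). { rewrite (norm2_ext n _ _ Hvv), norm2_perm by auto. lra. }
 destruct ((proj2 Hst) v' Hnv) as [Ha Hl].
 destruct HM as [HM1 _]. cbv zeta in HM1.
 pose proof (lam_unique n proj v' lam HM1) as Hlu.
 assert (Q1 : veq n (mvmul n Qh v') (proj v')).
 { apply (Q_apply n K W Qh v' (proj v') lam); auto. intros i Hi; apply (HI i Hi). intros i Hi; apply (HI i Hi). }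
 assert (Q2 : veq n (mvmul n Qh v0) (proj v0)).
 { apply (Q_apply n K W Qh v0 (proj v0) (lamv proj v0)); auto. intros i Hi; apply (HI i Hi).
   apply (lamv_rep n proj Hproj).
   intros i Hi Hne. apply Hsupp; auto. rewrite Hlu by auto. apply Hl; auto.
   intros i Hi. destruct (HI i Hi) as [Hi1 HB0].
   assert (Hge : 0 <= mvmul n Bm (proj v0) i) by (rewrite Bu by lia; pose proof (proj_in n proj Hproj v0 i ltac:(lia)); lra).
   destruct (Rle_lt_or_eq_dec 0 _ Hge) as [Hgt|Heq]; [exfalso; pose proof (Ha i Hi1 Hgt); lra | auto]. }
 assert (SA : veq n (vcomp (Srho y') s) (proj v')).
 { intros i Hi. rewrite (S_formula y' s Hs Hys i Hi). refine (proj_ext n proj _ _ Hproj _ i Hi). intros j Hj. unfold v', vsub. rewrite HPy; auto. }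
 assert (SB : veq n (vcomp (Srho x) s) (proj v0)).
 { intros i Hi. rewrite (S_formula x s Hs Hxs i Hi). refine (proj_ext n proj _ _ Hproj _ i Hi). intros j Hj. unfold v0, vsub. rewrite Exs; auto. }
 assert (Hdiff : forall j, (j < n)%nat -> Srho y' j - Srho x j = mvmul n Q dx j).
 { intros j Hj. destruct (sinv_spec n s j Hs Hj) as [Hi Ej].
   rewrite (mv_meq n n _ _ dx j HQ Hj), mv_assoc. rewrite (permmT_mv n s _ Hs j Hj). unfold vcomp.
   rewrite mv_assoc. rewrite (mv_ext n Qh _ (vsub v' v0)) by (intros k Hk; rewrite HPdx, Hvv; auto).
   unfold vsub at 1. rewrite mv_minus. rewrite Q1, Q2 by auto. rewrite <- SA, <- SB by auto. unfold vcomp. rewrite Ej. auto. }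
 assert (Hnx : norm2 n (vsub y' x) = norm2 n dx) by (apply norm2_ext; intros i Hi; unfold vsub, y', vadd; ring).
 assert (HTj : forall j, (j < n)%nat -> prox y' j - prox x j = q j * (Srho y' j - Srho x j)).
 { intros j Hj. rewrite (prox_TS y' j Hj), (prox_TS x j Hj).
   destruct (Hq j Hj) as [Q1' [Q2' Q3']].
   apply (HT (norm2 n dx) ltac:(lra) j Hj); auto.
   pose proof (coord_le_norm2 n (vsub (Srho y') (Srho x)) j Hj). pose proof (Srho_nonexp y' x). unfold vsub at 1 in H3. lra. }
 rewrite norm2_zero. unfold Rpower. pose proof (exp_pos ((1 + gamma) * ln (norm2 n dx))). lra.
 intros j Hj. unfold vsub. rewrite (mv_meq n n _ _ dx j HV Hj), mv_assoc, (mv_meq n n _ _ _ j HTh Hj), mv_diag by auto.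
 rewrite HTj, Hdiff by auto. ring. Qed.


Lemma norm2_scal t x : 0 <= t -> norm2 n (vscal t x) = t * norm2 n x.
Proof. intros Ht. change (sqrt (sqnorm n (vscal t x)) = t * sqrt (sqnorm n x)). replace (sqnorm n (vscal t x)) with (t^2 * sqnorm n x).
 rewrite sqrt_mult_alt. rewrite sqrt_pow2; auto. apply pow2_ge_0.
 unfold sqnorm, vscal. rewrite <- rsum_scal. apply rsum_ext; intros; ring. Qed.

Lemma partB x d : dir_diff_at n prox x d.
Proof.
 set (s0 := Psel x). set (v0 := vsub (vcomp x s0) (vscal rho (wvec n))).
 destruct (stable_ex n proj Hproj v0) as [d1 Hst].
 assert (Hd1 : d1 > 0) by apply (proj1 Hst).
 destruct (gap_ex n x) as [dg [Hdg Hg]].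
 set (m := Rmin d1 dg). assert (Hm : m > 0) by (apply Rmin_pos; auto).
 pose proof (Rmin_l d1 dg). pose proof (Rmin_r d1 dg). fold m in H, H0.
 pose proof (norm2_nonneg n d) as HNd.
 set (t0 := m / (2 * (norm2 n d + 1))).
 assert (Ht0 : t0 > 0) by (unfold t0; apply Rdiv_lt_0_compat; lra).
 assert (Ht0d : t0 * norm2 n d < m).
 { assert (t0 * (2 * (norm2 n d + 1)) = m) by (unfold t0; field; lra). nra. }
 set (y2 := vadd x (vscal t0 d)). set (s := Psel y2).
 assert (Hs : is_perm n s) by apply sel_perm.
 assert (Hys : inD n (vcomp y2 s)) by apply sel_sorted.
 assert (Hxs : inD n (vcomp x s)).
 { apply (sort_transfer n x (vscal t0 d) s dg); auto. rewrite norm2_scal; lra. }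
 assert (Exs : veq n (vcomp x s) (vcomp x s0)) by (apply sorted_unique; auto; apply sel_perm || apply sel_sorted).
 assert (Hray : forall t, 0 <= t <= t0 -> inD n (vcomp (vadd x (vscal t d)) s)).
 { intros t Ht i Hi. pose proof (Hxs i Hi). pose proof (Hys i Hi). unfold vcomp, y2, vadd, vscal in *.
   assert (t * (d (s i) - d (s (S i))) >= t0 * (d (s i) - d (s (S i))) \/ 0 <= d (s i) - d (s (S i))) by
     (destruct (Rle_dec 0 (d (s i) - d (s (S i)))); [right; auto| left; nra]).
   destruct H3; nra. }
 set (v2 := vsub (vcomp y2 s) (vscal rho (wvec n))).
 assert (Hvv : veq n (vsub v2 v0) (vscal t0 (vcomp d s))).
 { intros i Hi. unfold v2, v0, vsub. rewrite <- Exs by auto. unfold vcomp, y2, vadd, vscal. ring. }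
 assert (Hnv : norm2 n (vsub v2 v0) < d1).
 { rewrite (norm2_ext n _ _ Hvv), norm2_scal, norm2_perm by (auto; lra). lra. }
 assert (SB : veq n (vcomp (Srho x) s) (proj v0)).
 { intros i Hi. rewrite (S_formula x s Hs Hxs i Hi). refine (proj_ext n proj _ _ Hproj _ i Hi). intros j Hj. unfold v0, vsub. rewrite Exs; auto. }
 set (a := fun j => (proj v2 (sinv n s j) - proj v0 (sinv n s j)) / t0).
 assert (HS1 : forall t, 0 < t < t0 -> forall j, (j < n)%nat -> Srho (vadd x (vscal t d)) j = Srho x j + t * a j).
 { intros t Ht j Hj. destruct (sinv_spec n s j Hs Hj) as [Hi Ej]. set (i := sinv n s j) in *.
   assert (Hst01 : 0 <= t / t0 <= 1).
   { split. apply Rmult_le_pos; [lra| left; apply Rinv_0_lt_compat; lra].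
     apply Rmult_le_reg_r with t0; [lra|]. replace (t / t0 * t0) with t by (field; lra). lra. }
   assert (Hseg := segment n proj Hproj v0 d1 v2 (t / t0) Hst Hnv Hst01 i Hi).
   pose proof (S_formula (vadd x (vscal t d)) s Hs (Hray t ltac:(lra)) i Hi).
   assert (E2 : proj (vsub (vcomp (vadd x (vscal t d)) s) (vscal rho (wvec n))) i = proj (lin v0 v2 (t / t0)) i).
   { refine (proj_ext n proj _ _ Hproj _ i Hi). intros k Hk. unfold lin. change (v2 k - v0 k) with (vsub v2 v0 k). rewrite (Hvv k Hk).
     pose proof (Exs k Hk) as Ek. unfold vcomp in Ek. unfold v0, vsub, vscal, vcomp, vadd. rewrite <- Ek. field. lra. }
   pose proof (SB i Hi). unfold vcomp in *. rewrite Ej in *. rewrite H1, E2, Hseg. unfold lin, a. fold i. rewrite <- H2. field. lra. }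
 destruct (finite_choice n (fun j t => Tf beta (Srho x j + t * a j) - Tf beta (Srho x j))) as [t1 [c [Ht1 Hc]]].
 { intros j Hj. destruct (T_ray beta (Srho x j) (a j) Hbeta) as [t1 [c [Ht1 Hc]]]. exists t1, c. split; auto.
   intros t Ht. rewrite Hc by auto. ring. }
 exists c. intros eps Heps. exists (Rmin t0 t1). split. apply Rmin_pos; auto.
 intros t Ht. pose proof (Rmin_l t0 t1). pose proof (Rmin_r t0 t1).
 rewrite norm2_zero. auto. intros j Hj. unfold vsub. unfold vscal at 1.
 rewrite (prox_TS (vadd x (vscal t d)) j Hj), (prox_TS x j Hj). rewrite (HS1 t ltac:(lra) j Hj).
 rewrite (Hc j Hj t ltac:(lra)). field. lra. Qed.

End Main.

Theorem mainTheorem7 :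
  forall (n : nat) (beta rho gamma : R)
    (prox Srho proj : vec -> vec) (Psel : vec -> nat -> nat),
    beta > 0 -> rho > 0 -> gamma > 0 ->
    is_prox_map n (pen n beta rho) prox ->
    is_prox_map n (fun x => rho * pairsum n x) Srho ->
    is_proj_D n proj ->
    is_sort_perm_sel n Psel ->
    (forall x d : vec, dir_diff_at n prox x d) /\
    (forall x : vec, exists C delta, C > 0 /\ delta > 0 /\
       forall dx : vec, 0 < norm2 n dx < delta ->
       forall V : mat, Mset n beta rho Srho proj Psel (vadd x dx) V ->
         norm2 n (vsub (vsub (prox (vadd x dx)) (prox x)) (mvmul n V dx))
           <= C * Rpower (norm2 n dx) (1 + gamma)).
Proof. intros n beta rho gamma prox Srho proj Psel Hb Hr Hg Hp HS Hpj Hsel. split.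
 - intros x d. apply (partB n beta rho prox Srho proj Psel); auto.
 - intros x. apply (partA n beta rho prox Srho proj Psel); auto. Qed.
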